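(* Let $b_1,b_2,b_3\in\mathbb{R}$ with $b_1b_2b_3\neq0$ and consider the system $$\dot x_1=b_1x_2,\qquad \dot x_2=b_2x_1x_3,\qquad \dot x_3=b_3x_1x_2 .$$ Let $m\in\mathbb{R}\setminus\{0\}$ with $mb_1b_2<0$. Then the equilibrium state $e_3^m=(0,0,m)$ is nonlinear stable.
   Context: Nonlinear stable means stable in the sense of Lyapunov: for every neighbourhood $U$ of the equilibrium there is a neighbourhood $V$ such that every trajectory starting in $V$ remains in $U$ for all $t\ge0$. *)

(* Defs.v *)
From Stdlib Require Import Reals.
From Coquelicot Require Import Coquelicot.
Open Scope R_scope.

Definition pt (x1 x2 x3 : R) : R * R * R := (x1, x2, x3).

Definition is_solution (b1 b2 b3 a c : R) (x1 x2 x3 : R -> R) : Prop :=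
  forall t, a < t < c ->
    is_derive x1 t (b1 * x2 t) /\
    is_derive x2 t (b2 * x1 t * x3 t) /\
    is_derive x3 t (b3 * x1 t * x2 t).

Definition nonlinear_stable (b1 b2 b3 : R) (e : R * R * R) : Prop :=
  forall U : R * R * R -> Prop, locally e U ->
    exists V : R * R * R -> Prop, locally e V /\
      forall (a c : R) (x1 x2 x3 : R -> R),
        a < 0 < c -> is_solution b1 b2 b3 a c x1 x2 x3 ->
        V (pt (x1 0) (x2 0) (x3 0)) ->
        forall t, 0 <= t < c -> U (pt (x1 t) (x2 t) (x3 t)).

(* Main.v *)
Require Import Defs.
From Stdlib Require Import Reals Lra.
From Coquelicot Require Import Coquelicot.
From Stdlib Require Import Ranalysis5 Psatz Lra.
Open Scope R_scope.
Lemma dR_plus f g x df dg : is_derive f x df -> is_derive g x dg ->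
  is_derive (fun t => f t + g t) x (df + dg).
Proof. intros; apply (is_derive_plus f g); auto. Qed.
Lemma dR_minus f g x df dg : is_derive f x df -> is_derive g x dg ->
  is_derive (fun t => f t - g t) x (df - dg).
Proof. intros; apply (is_derive_minus f g); auto. Qed.
Lemma dR_scal f x k df : is_derive f x df -> is_derive (fun t => k * f t) x (k * df).
Proof. intros; apply is_derive_scal; auto. Qed.
Lemma dR_sq f x df : is_derive f x df -> is_derive (fun t => f t ^ 2) x (2 * f x * df).
Proof. intros H. replace (2 * f x * df) with (INR 2 * df * f x ^ Init.Nat.pred 2).
  apply is_derive_pow; auto. simpl; ring. Qed.
Lemma dR_shift f x df c : is_derive f x df -> is_derive (fun t => f t - c) x df.
Proof. intros H. replace df with (df - 0) by ring. apply dR_minus; auto.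
  exact (@is_derive_const R_AbsRing R_NormedModule c x). Qed.
Lemma dR_eq (f : R -> R) (x l l' : R) : is_derive f x l -> l = l' -> is_derive f x l'.
Proof. intros H ->; auto. Qed.

Lemma cont_of_der (f : R -> R) (x l : R) : is_derive f x l -> continuity_pt f x.
Proof. intros H. apply continuity_pt_filterlim. apply (@ex_derive_continuous R_AbsRing R_NormedModule).
  exists l; auto. Qed.

Lemma const_on (a c : R) (f : R -> R) : a < 0 ->
  (forall t, a < t < c -> is_derive f t 0) -> forall t, 0 <= t < c -> f t = f 0.
Proof.
  intros Ha Hd t [Ht0 Htc]. destruct Ht0 as [Ht0|<-]; [|reflexivity].
  destruct (MVT_gen f 0 t (fun _ => 0)) as [z [_ Hz]].
  - rewrite Rmin_left, Rmax_right by lra. intros x Hx; apply Hd; lra.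
  - rewrite Rmin_left, Rmax_right by lra. intros x Hx; eapply cont_of_der, Hd; lra.
  - lra.
Qed.

Lemma ivt_hit (g : R -> R) (t r : R) : 0 <= t ->
  (forall x, 0 <= x <= t -> continuity_pt g x) -> g 0 < r -> r <= g t ->
  exists s, 0 <= s <= t /\ g s = r.
Proof.
  intros Ht0 Hc H0 Ht. destruct Ht as [Ht|Ht].
  - destruct Ht0 as [Hp| <-]; [|lra].
    destruct (IVT_interv (fun x => g x - r) 0 t) as [z [Hz Hz']]; try lra.
    + intros x Hx. apply continuity_pt_minus; [apply Hc; auto| apply continuity_pt_const; intros ? ?; auto].
    + exists z; split; auto; lra.
  - exists t. split; [lra|auto].
Qed.
Lemma ball_pt (y1 y2 y3 z1 z2 z3 e : R) :
  ball (pt y1 y2 y3) e (pt z1 z2 z3) <-> Rabs (z1 - y1) < e /\ Rabs (z2 - y2) < e /\ Rabs (z3 - y3) < e.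
Proof.
  unfold pt. split.
  - intros [[H1 H2] H3]. repeat split; assumption.
  - intros [H1 [H2 H3]]. split; [split|]; assumption.
Qed.

Lemma rabs_sub_le p q : Rabs (p - q) <= Rabs p + Rabs q.
Proof. unfold Rminus. rewrite <- (Rabs_Ropp q). apply Rabs_triang. Qed.
Lemma rabs_add_le p q : Rabs (p + q) <= Rabs p + Rabs q.
Proof. apply Rabs_triang. Qed.
Lemma rabs_sq y : Rabs (y ^ 2) = y ^ 2.
Proof. apply Rabs_pos_eq. apply pow2_ge_0. Qed.
Lemma rabs_lt_sq y e : Rabs y < e -> y ^ 2 < e ^ 2.
Proof. intros H. apply Rabs_def2 in H. nra. Qed.
Lemma sq_lt_rabs y e : 0 < e -> y ^ 2 < e ^ 2 -> Rabs y < e.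
Proof. intros He H. unfold Rabs; destruct (Rcase_abs y); nra. Qed.
Lemma le_div_mul r X Y : 0 < Y -> r <= X / Y -> r * Y <= X.
Proof. intros HY H. replace X with (X / Y * Y) by (field; lra).
  apply Rmult_le_compat_r; lra. Qed.

Lemma key1 b2 b3 k X1 X2 u : 0 < k ->
  Rabs b3 * (X2^2 + k*X1^2) <= Rabs (b3*X2^2 + b3*k*X1^2 - b2*u^2) + Rabs b2 * u^2.
Proof.
  intros Hk.
  assert (HW : 0 <= X2^2 + k*X1^2) by nra.
  rewrite <- (Rabs_pos_eq _ HW), <- Rabs_mult.
  replace (b3 * (X2^2 + k*X1^2)) with ((b3*X2^2 + b3*k*X1^2 - b2*u^2) + b2*u^2) by ring.
  eapply Rle_trans; [apply rabs_add_le|]. rewrite Rabs_mult, rabs_sq. lra.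
Qed.

Lemma key2 b1 b3 k X1 X2 u : 0 < k ->
  Rabs u * (2 * Rabs b1) <= Rabs (2*b1*u - b3*X1^2) + Rabs b3 / k * (X2^2 + k*X1^2).
Proof.
  intros Hk.
  replace (Rabs u * (2 * Rabs b1)) with (Rabs ((2*b1*u - b3*X1^2) + b3*X1^2)).
  2:{ replace ((2*b1*u - b3*X1^2) + b3*X1^2) with (2*b1*u) by ring.
      rewrite !Rabs_mult, (Rabs_pos_eq 2) by lra. ring. }
  eapply Rle_trans; [apply rabs_add_le|]. apply Rplus_le_compat_l.
  rewrite Rabs_mult, rabs_sq.
  replace (Rabs b3 / k * (X2^2 + k*X1^2)) with (Rabs b3 * X1^2 + Rabs b3 / k * X2^2) by (field; lra).
  assert (0 <= Rabs b3 / k * X2^2).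
  { apply Rmult_le_pos; [apply Rdiv_le_0_compat; [apply Rabs_pos|lra]|apply pow2_ge_0]. }
  lra.
Qed.

Theorem proposition4p4 (b1 b2 b3 m : R) :
  b1 * b2 * b3 <> 0 -> m <> 0 -> m * b1 * b2 < 0 ->
  nonlinear_stable b1 b2 b3 (pt 0 0 m).
Proof.
  intros Hb Hm Hmb U [eps HU].
  assert (Hb1 : b1 <> 0) by (intro; apply Hb; subst; ring).
  assert (Hb2 : b2 <> 0) by (intro; apply Hb; subst; ring).
  assert (Hb3 : b3 <> 0) by (intro; apply Hb; subst; ring).
  set (k := -(b2*m)/b1).
  assert (Hk : 0 < k).
  { unfold k. replace (-(b2*m)/b1) with (-(m*b1*b2)/(b1*b1)) by (field; auto).
    apply Rdiv_lt_0_compat; [lra|]. assert (b1*b1 >= 0) by nra.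
    destruct (Rtotal_order b1 0) as [|[|]]; [nra|contradiction|nra]. }
  set (A := Rabs b3). assert (HA : 0 < A) by (apply Rabs_pos_lt; auto).
  set (Cc := A / k). assert (HC : 0 < Cc) by (apply Rdiv_lt_0_compat; auto).
  set (be := 2 * Rabs b1). assert (Hbe : 0 < be) by (unfold be; assert (0 < Rabs b1) by (apply Rabs_pos_lt; auto); lra).
  set (B2 := Rabs b2). assert (HB2 : 0 < B2) by (apply Rabs_pos_lt; auto).
  pose proof (cond_pos eps) as Heps.
  set (r0 := Rmin (Rmin (eps^2) (k*eps^2)) (Rmin (A*be^2/(16*B2*Cc^2)) (eps*be/(4*Cc)))).
  assert (Hr0 : 0 < r0).
  { assert (0 < eps^2) by (apply pow_lt; lra).
    assert (0 < be^2) by (apply pow_lt; lra).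
    assert (0 < Cc^2) by (apply pow_lt; lra).
    unfold r0. apply Rmin_pos; apply Rmin_pos.
    - lra.
    - apply Rmult_lt_0_compat; lra.
    - apply Rdiv_lt_0_compat.
      + apply Rmult_lt_0_compat; lra.
      + apply Rmult_lt_0_compat; [apply Rmult_lt_0_compat|]; lra.
    - apply Rdiv_lt_0_compat; apply Rmult_lt_0_compat; lra. }
  assert (R1 : r0 <= eps^2) by (unfold r0; eapply Rle_trans; [apply Rmin_l|apply Rmin_l]).
  assert (R2 : r0 <= k*eps^2) by (unfold r0; eapply Rle_trans; [apply Rmin_l|apply Rmin_r]).
  assert (R3 : r0 * (16*B2*Cc^2) <= A*be^2).
  { apply le_div_mul; [apply Rmult_lt_0_compat; [apply Rmult_lt_0_compat; lra|apply pow_lt; lra]|].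
    unfold r0; eapply Rle_trans; [apply Rmin_r|apply Rmin_l]. }
  assert (R4 : r0 * (4*Cc) <= eps*be).
  { apply le_div_mul; [lra|]. unfold r0; eapply Rle_trans; [apply Rmin_r|apply Rmin_r]. }
  set (M := 2 + k + (2*Rabs b1 + A)/Cc + 2*(A*(1+k)+B2)/A).
  assert (HM1 : 0 <= (2*Rabs b1 + A)/Cc).
  { apply Rdiv_le_0_compat; [pose proof (Rabs_pos b1); lra|lra]. }
  assert (HM2 : 0 <= 2*(A*(1+k)+B2)/A).
  { apply Rdiv_le_0_compat; [nra|lra]. }
  assert (HMk : 1 + k <= M) by (unfold M; lra).
  assert (HMpos : 0 < M) by lra.
  assert (HMC : 2*Rabs b1 + A <= Cc * M).
  { unfold M. replace (Cc * (2 + k + (2*Rabs b1 + A)/Cc + 2*(A*(1+k)+B2)/A))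
      with (Cc * (2 + k + 2*(A*(1+k)+B2)/A) + (2*Rabs b1 + A)) by (field; lra).
    assert (0 <= Cc * (2 + k + 2*(A*(1+k)+B2)/A)) by (apply Rmult_le_pos; lra). lra. }
  assert (HMA : 2*(A*(1+k)+B2) < A * M).
  { unfold M. replace (A * (2 + k + (2*Rabs b1 + A)/Cc + 2*(A*(1+k)+B2)/A))
      with (A * (2 + k + (2*Rabs b1 + A)/Cc) + 2*(A*(1+k)+B2)) by (field; lra).
    assert (0 < A * (2 + k + (2*Rabs b1 + A)/Cc)) by (apply Rmult_lt_0_compat; lra). lra. }
  set (eta := Rmin 1 (r0 / M)).
  assert (Heta : 0 < eta) by (unfold eta; apply Rmin_pos; [lra|apply Rdiv_lt_0_compat; lra]).
  assert (Heta1 : eta <= 1) by (unfold eta; apply Rmin_l).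
  assert (HetaM : eta * M <= r0) by (apply le_div_mul; [lra|unfold eta; apply Rmin_r]).
  exists (ball (pt 0 0 m) eta). split.
  { exists (mkposreal eta Heta). auto. }
  intros a c x1 x2 x3 Hac Hsol HV t Ht.
  apply ball_pt in HV. rewrite !Rminus_0_r in HV. destruct HV as [V1 [V2 V3]].
  assert (HD : forall s, 0 <= s < c ->
     (fun t => 2*b1*(x3 t - m) - b3*x1 t^2) s = (fun t => 2*b1*(x3 t - m) - b3*x1 t^2) 0).
  { apply (const_on a c); [lra|]. intros s Hs. destruct (Hsol s Hs) as [d1 [d2 d3]].
    apply dR_eq with (2*b1*(b3*x1 s*x2 s) - b3*(2*x1 s*(b1*x2 s))).
    - apply dR_minus; [apply dR_scal, dR_shift|apply dR_scal, dR_sq]; auto.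
    - ring. }
  assert (HE : forall s, 0 <= s < c ->
     (fun t => b3*x2 t^2 + b3*k*x1 t^2 - b2*(x3 t - m)^2) s
     = (fun t => b3*x2 t^2 + b3*k*x1 t^2 - b2*(x3 t - m)^2) 0).
  { apply (const_on a c); [lra|]. intros s Hs. destruct (Hsol s Hs) as [d1 [d2 d3]].
    apply dR_eq with (b3*(2*x2 s*(b2*x1 s*x3 s)) + b3*k*(2*x1 s*(b1*x2 s))
                       - b2*(2*(x3 s - m)*(b3*x1 s*x2 s))).
    - apply dR_minus; [apply dR_plus; apply dR_scal, dR_sq; auto|].
      apply dR_scal. apply (dR_sq (fun t => x3 t - m)). apply dR_shift; auto.
    - unfold k. field. auto. }
  cbv beta in HD, HE.
  set (D0 := 2*b1*(x3 0 - m) - b3*x1 0^2) in *.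
  set (E0 := b3*x2 0^2 + b3*k*x1 0^2 - b2*(x3 0 - m)^2) in *.
  assert (Heta2 : eta^2 <= eta).
  { replace (eta^2) with (eta*eta) by ring. rewrite <- (Rmult_1_r eta) at 3.
    apply Rmult_le_compat_l; lra. }
  assert (Sx1 : x1 0 ^2 < eta) by (pose proof (rabs_lt_sq _ _ V1); lra).
  assert (Sx2 : x2 0 ^2 < eta) by (pose proof (rabs_lt_sq _ _ V2); lra).
  assert (Sx3 : (x3 0 - m) ^2 < eta) by (pose proof (rabs_lt_sq _ _ V3); lra).
  assert (EM1 : (2*Rabs b1 + A)*eta <= Cc*M*eta) by (apply Rmult_le_compat_r; lra).
  assert (EM2 : Cc*(eta*M) <= Cc*r0) by (apply Rmult_le_compat_l; lra).
  assert (EM3 : 2*(A*(1+k)+B2) * eta < A * M * eta) by (apply Rmult_lt_compat_r; lra).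
  assert (EM4 : A*(eta*M) <= A*r0) by (apply Rmult_le_compat_l; lra).
  assert (EM5 : eta*(1+k) <= eta*M) by (apply Rmult_le_compat_l; lra).
  assert (EM6 : k * x1 0^2 <= k*eta) by (apply Rmult_le_compat_l; lra).
  assert (HD0 : Rabs D0 <= Cc * r0).
  { unfold D0. eapply Rle_trans; [apply rabs_sub_le|].
    rewrite !Rabs_mult, rabs_sq, (Rabs_pos_eq 2) by lra. fold A.
    assert (Rabs b1 * Rabs (x3 0 - m) <= Rabs b1 * eta)
      by (apply Rmult_le_compat_l; [apply Rabs_pos|lra]).
    assert (A * x1 0 ^2 <= A * eta) by (apply Rmult_le_compat_l; lra).
    lra. }
  assert (HE0 : 2 * Rabs E0 < A * r0).
  { unfold E0. eapply Rle_lt_trans.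
    { apply Rmult_le_compat_l; [lra|]. eapply Rle_trans; [apply rabs_sub_le|].
      apply Rplus_le_compat_r, rabs_add_le. }
    rewrite !Rabs_mult, !rabs_sq, (Rabs_pos_eq k) by lra. fold A B2.
    assert (A * x2 0^2 <= A*eta) by (apply Rmult_le_compat_l; lra).
    assert (A * k * x1 0^2 <= A*k*eta) by (apply Rmult_le_compat_l; [apply Rmult_le_pos|]; lra).
    assert (B2 * (x3 0 - m)^2 <= B2*eta) by (apply Rmult_le_compat_l; lra).
    lra. }
  set (W := fun t => x2 t^2 + k*x1 t^2).
  assert (HW0 : W 0 < r0) by (unfold W; lra).
  assert (HWt : W t < r0).
  { destruct (Rlt_or_le (W t) r0) as [|Hge]; auto. exfalso.
    destruct (ivt_hit W t r0) as [s [Hs HWs]]; try lra; auto.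
    { intros x Hx. destruct (Hsol x) as [d1 [d2 _]]; [lra|].
      apply cont_of_der with (2*x2 x*(b2*x1 x*x3 x) + k*(2*x1 x*(b1*x2 x))).
      unfold W. apply dR_plus; [|apply dR_scal]; apply dR_sq; auto. }
    assert (Hsc : 0 <= s < c) by lra.
    pose proof (key1 b2 b3 k (x1 s) (x2 s) (x3 s - m) Hk) as K1.
    pose proof (key2 b1 b3 k (x1 s) (x2 s) (x3 s - m) Hk) as K2.
    rewrite (HE s Hsc) in K1. rewrite (HD s Hsc) in K2. fold A B2 E0 in K1. fold be A Cc D0 in K2.
    unfold W in HWs. rewrite HWs in K1, K2.
    set (u := x3 s - m) in *.
    assert (Hu : Rabs u * be <= 2 * Cc * r0) by lra.
    assert (Hu2 : u^2 * be^2 <= 4 * Cc^2 * r0^2).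
    { assert (0 <= Rabs u * be) by (apply Rmult_le_pos; [apply Rabs_pos|lra]).
      replace (u^2*be^2) with ((Rabs u * be)^2).
      2:{ unfold Rabs; destruct (Rcase_abs u); ring. }
      replace (4 * Cc^2 * r0^2) with ((2*Cc*r0)^2) by ring.
      apply pow_incr; lra. }
    assert (Hu3 : B2 * u^2 * be^2 <= A * be^2 * r0 / 4).
    { assert (B2 * (u^2*be^2) <= B2 * (4*Cc^2*r0^2)) by (apply Rmult_le_compat_l; lra).
      assert (r0 * (r0*(16*B2*Cc^2)) <= r0*(A*be^2)) by (apply Rmult_le_compat_l; lra).
      lra. }
    assert (Hu4 : B2 * u^2 <= A * r0 / 4).
    { apply Rmult_le_reg_r with (be^2); [apply pow_lt; lra|]. lra. }
    assert (0 < A*r0) by (apply Rmult_lt_0_compat; lra).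
    lra. }
  unfold W in HWt.
  destruct Ht as [Ht0 Htc].
  apply HU. apply ball_pt. rewrite !Rminus_0_r.
  assert (Hx1 : x1 t ^2 < eps^2).
  { pose proof (pow2_ge_0 (x2 t)). apply Rmult_lt_reg_l with k; lra. }
  assert (0 <= k*x1 t^2) by (apply Rmult_le_pos; [lra|apply pow2_ge_0]).
  repeat split.
  - apply sq_lt_rabs; auto.
  - apply sq_lt_rabs; [auto|lra].
  - pose proof (key2 b1 b3 k (x1 t) (x2 t) (x3 t - m) Hk) as K2.
    rewrite (HD t (conj Ht0 Htc)) in K2. fold be A Cc D0 in K2.
    assert (Cc * (x2 t ^2 + k*x1 t^2) <= Cc * r0) by (apply Rmult_le_compat_l; lra).
    assert (Rabs (x3 t - m) * be <= eps * be / 2) by lra.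
    assert (Rabs (x3 t - m) <= eps / 2).
    { apply Rmult_le_reg_r with be; [lra|]. lra. }
    lra.
Qed.
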